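(* Let $\beta\ne0$, and consider the episodic MDP with finite state and action spaces, a tabular stochastic policy $\pi_\theta$, soft value functions $V^\beta_{\pi_\theta},Q^\beta_{\pi_\theta}$ and behavior state weights $\rho_b$ as in the context. Define $$g(\pi_\theta)=\frac1\beta\sum_{s\in\mathcal S}\rho_b(s)\sum_{a\in\mathcal A}\nabla_\theta\pi_\theta(a|s)\,e^{\beta Q^\beta_{\pi_\theta}(s,a)},$$ where $Q^\beta_{\pi_\theta}$ is held fixed (not differentiated), and let $\theta'=\theta+\alpha\,g(\pi_\theta)$. Then there exists $\epsilon>0$ such that for all $0<\alpha<\epsilon$, $$V^\beta_{\pi_\theta}(s)\le V^\beta_{\pi_{\theta'}}(s)\qquad\text{for all }s\in\mathcal S.$$
   Context: Episodic MDP: finite state space $\mathcal S$, finite action space $\mathcal A$, transition probabilities $p(s'|s,a)$, reward $r(s,a)$. There is a set $\mathcal S_{\rm term}\subset\mathcal S$ of absorbing terminal states with $r(s,a)=0$ and $p(\mathcal S_{\rm term}|s,a)=1$ for $s\in\mathcal S_{\rm term}$, and an integer $T$ such that from any state, under any sequence of actions, the state lies in $\mathcal S_{\rm term}$ after at most $T$ transitions with probability 1. Tabular stochastic policy: $\theta=(\theta_s)_{s\in\mathcal S}$, and for each $s$ the distribution $\pi_\theta(\cdot|s)$ on $\mathcal A$ depends only on the block $\theta_s$, continuously differentiably (e.g. softmax $\pi_\theta(a|s)=e^{\theta_{s,a}}/\sum_{a'}e^{\theta_{s,a'}}$). Soft value functions: $V^\beta_\pi(s)=\frac1\beta\log\mathbb{E}_\pi\big[e^{\beta\sum_{t\ge1}r_t}\mid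 s_1=s\big]$, $Q^\beta_\pi(s,a)=\frac1\beta\log\mathbb{E}_\pi\big[e^{\beta\sum_{t\ge1}r_t}\mid s_1=s,a_1=a\big]$; they satisfy $V^\beta_\pi(s)=\frac1\beta\log\sum_a\pi(a|s)e^{\beta Q^\beta_\pi(s,a)}$ and $Q^\beta_\pi(s,a)=r(s,a)+\frac1\beta\log\sum_{s'}p(s'|s,a)e^{\beta V^\beta_\pi(s')}$. $\rho_b:\mathcal S\to[0,\infty)$ is the state distribution of an arbitrary behavior policy (any nonnegative weights). *)

(* Defs.v *)
From HB Require Import structures.
From mathcomp Require Import all_boot all_order all_algebra.
From mathcomp Require Import all_classical all_reals all_analysis.
Set Implicit Arguments. Unset Strict Implicit. Unset Printing Implicit Defensive.
Import Order.TTheory GRing.Theory Num.Theory.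
Import numFieldNormedType.Exports.
Local Open Scope ring_scope.

Definition partial (R : realType) (n : nat) (f : 'rV[R]_n -> R)
  (x : 'rV[R]_n) (i : 'I_n) : R := 'D_(delta_mx 0 i) f x.

Definition grad (R : realType) (n : nat) (f : 'rV[R]_n -> R) (x : 'rV[R]_n)
  : 'rV[R]_n := \row_i partial f x i.

Definition C1 (R : realType) (n : nat) (f : 'rV[R]_n -> R) : Prop :=
  (forall x, differentiable f x) /\ (forall i, continuous (fun x => partial f x i)).

(* expU n s = E_pol[ exp(beta * sum_{t=1}^n r_t) | s_1 = s ]  (expectation over the
   length-n trajectory, computed by the tower property) *)
Fixpoint expU (R : realType) (S A : finType) (beta : R) (p : S -> A -> S -> R)
  (r : S -> A -> R) (pol : S -> A -> R) (n : nat) (s : S) : R :=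
  match n with
  | 0 => 1
  | n'.+1 => \sum_(a : A) pol s a *
      (expR (beta * r s a) * \sum_(s' : S) p s a s' * expU beta p r pol n' s')
  end.

(* soft value V^beta_pol(s) = 1/beta log E[e^{beta sum_{t>=1} r_t} | s_1 = s];
   all rewards after T transitions are 0, so the horizon-T expectation is the full one *)
Definition Vsoft (R : realType) (S A : finType) (beta : R) (p : S -> A -> S -> R)
  (r : S -> A -> R) (T : nat) (pol : S -> A -> R) (s : S) : R :=
  beta^-1 * ln (expU beta p r pol T s).

Definition Qsoft (R : realType) (S A : finType) (beta : R) (p : S -> A -> S -> R)
  (r : S -> A -> R) (T : nat) (pol : S -> A -> R) (s : S) (a : A) : R :=
  beta^-1 * ln (expR (beta * r s a) *
                \sum_(s' : S) p s a s' * expU beta p r pol T.-1 s').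

Definition policy_of (R : realType) (S A : finType) (d : S -> nat)
  (pi : forall s : S, 'rV[R]_(d s) -> A -> R) (theta : forall s : S, 'rV[R]_(d s))
  : S -> A -> R := fun s a => pi s (theta s) a.

(* block s of g(pi_theta) = 1/beta sum_s' rho(s') sum_a grad_theta pi_theta(a|s') e^{beta Q(s',a)};
   since pi_theta(.|s') depends only on theta_{s'}, only s' = s contributes to block s;
   Q is held fixed (not differentiated). *)
Definition soft_pg_block (R : realType) (S A : finType) (d : S -> nat)
  (pi : forall s : S, 'rV[R]_(d s) -> A -> R) (beta : R) (p : S -> A -> S -> R)
  (r : S -> A -> R) (T : nat) (rho : S -> R) (theta : forall s : S, 'rV[R]_(d s))
  (s : S) : 'rV[R]_(d s) :=
  beta^-1 *: (rho s *: \sum_(a : A)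
     (expR (beta * Qsoft beta p r T (policy_of pi theta) s a) *:
       grad (fun x => pi s x a) (theta s))).

Definition pg_update (R : realType) (S A : finType) (d : S -> nat)
  (pi : forall s : S, 'rV[R]_(d s) -> A -> R) (beta : R) (p : S -> A -> S -> R)
  (r : S -> A -> R) (T : nat) (rho : S -> R) (theta : forall s : S, 'rV[R]_(d s))
  (alpha : R) : forall s : S, 'rV[R]_(d s) :=
  fun s => theta s + alpha *: soft_pg_block pi beta p r T rho theta s.

(* Main.v *)
Require Import Defs.
From HB Require Import structures.
From mathcomp Require Import all_boot all_order all_algebra.
From mathcomp Require Import all_classical all_reals all_analysis.
From mathcomp Require Import ring lra.
Import Order.TTheory GRing.Theory Num.Theory.
Import numFieldNormedType.Exports.
Local Open Scope ring_scope.
Local Open Scope classical_set_scope.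

Lemma cvg_sum_seq (R : realType) (I : Type) (T : Type) (F : set_system T) (FF : Filter F)
  (r : seq I) (g : I -> T -> R) (l : I -> R) :
  (forall i, g i x @[x --> F] --> l i) ->
  (\sum_(i <- r) g i x) @[x --> F] --> \sum_(i <- r) l i.
Proof.
move=> H; elim: r => [|i r IH].
  rewrite big_nil; under eq_cvg do rewrite big_nil; exact: cvg_cst.
rewrite big_cons; under eq_cvg do rewrite big_cons.
exact: cvgD.
Qed.

Lemma analytic (R : realType) (A : finType) (n : nat) (f : A -> 'rV[R]_n -> R)
  (c : A -> R) (th : 'rV[R]_n) (beta rho : R) :
  beta != 0 -> 0 <= rho -> (forall a, differentiable (f a) th) ->
  \forall t \near 0^', 0 < t ->
    0 <= beta * (\sum_a c a * f a (th + t *: (beta^-1 *: (rho *: \sum_a (c a *: grad (f a) th))))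
                 - \sum_a c a * f a th).
Proof.
move=> b0 rho0 df.
set G := \sum_a (c a *: grad (f a) th).
set v := beta^-1 *: (rho *: G).
have [v0|vn0] := eqVneq v 0.
  near=> t => _; by rewrite v0 scaler0 addr0 subrr mulr0.
have Gi i : G 0 i = \sum_a c a * partial (f a) th i.
  by rewrite /G summxE; apply: eq_bigr => a _; rewrite !mxE.
have vi i : v 0 i = beta^-1 * (rho * G 0 i) by rewrite !mxE.
have Da a : 'D_v (f a) th = \sum_i v 0 i * partial (f a) th i.
  rewrite deriveE // {1}(row_sum_delta v) linear_sum; apply: eq_bigr => i _.
  by rewrite linearZ /= /partial deriveE.
set L := beta * \sum_a c a * 'D_v (f a) th.
have LE : L = rho * \sum_i G 0 i ^+ 2.
  rewrite /L; under eq_bigr do rewrite Da big_distrr.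
  rewrite exchange_big /= big_distrr big_distrr /=; apply: eq_bigr => i _.
  rewrite expr2 {2}Gi !big_distrr /=; apply: eq_bigr => a _.
  by rewrite vi; field.
have Lpos : 0 < L.
  rewrite LE; apply: mulr_gt0.
    rewrite lt_def rho0 andbT; apply: contraNneq vn0 => r0.
    by rewrite /v r0 scale0r scaler0.
  rewrite lt_def sumr_ge0 ?andbT; last by move=> i _; rewrite sqr_ge0.
  apply: contraNneq vn0 => /psumr_eq0P H.
  have G0 : G = 0.
    apply/rowP => i; rewrite mxE; apply/eqP; rewrite -sqrf_eq0; apply/eqP.
    by apply: H => // j _; rewrite sqr_ge0.
  by rewrite /v G0 !scaler0.
have cq : (fun t => beta * \sum_a c a * (t^-1 *: ((f a \o shift th) (t *: v) - f a th)))
     @ 0^' --> L.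
  apply: cvgMl_tmp; apply: cvg_sum_seq => a; apply: cvgMl_tmp.
  exact: (@diff_derivable _ _ _ _ _ v (df a)).
near=> t => tpos.
have : 0 < beta * \sum_a c a * (t^-1 *: ((f a \o shift th) (t *: v) - f a th)).
  by near: t; exact: (cvgr_gt _ cq _ Lpos).
have -> : beta * (\sum_a c a * f a (th + t *: v) - \sum_a c a * f a th) =
   t * (beta * \sum_a c a * (t^-1 *: ((f a \o shift th) (t *: v) - f a th))).
  rewrite -sumrB mulrA [t * beta]mulrC -mulrA; congr (_ * _); rewrite big_distrr.
  apply: eq_bigr => a _ /=; rewrite [t *: v + th]addrC.
  change (t^-1 *: (f a (th + t *: v) - f a th)) with (t^-1 * (f a (th + t *: v) - f a th)).
  by field; rewrite gt_eqF.
by move=> h; apply/ltW/mulr_gt0.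
Unshelve. all: by end_near.
Qed.
Section MDP.
Context {R : realType} {S A : finType}.
Variables (beta : R) (p : S -> A -> S -> R) (r : S -> A -> R)
  (Sterm : {set S}).
Hypothesis p0 : forall s a s', 0 <= p s a s'.
Hypothesis p1 : forall s a, \sum_(s' : S) p s a s' = 1.
Hypothesis rterm : forall s a, s \in Sterm -> r s a = 0.
Hypothesis pterm : forall s a, s \in Sterm -> \sum_(s' in Sterm) p s a s' = 1.

Fixpoint expUf (pol : S -> A -> R) (n : nat) (f : S -> R) (s : S) : R :=
  match n with
  | 0 => f s
  | n'.+1 => \sum_(a : A) pol s a *
      (expR (beta * r s a) * \sum_(s' : S) p s a s' * expUf pol n' f s')
  end.

Lemma expU_f pol n s : expU beta p r pol n s = expUf pol n (fun _ => 1) s.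
Proof.
elim: n s => //= n IH s; apply: eq_bigr => a _; congr (_ * (_ * _)).
by apply: eq_bigr => s' _; rewrite IH.
Qed.

Lemma expUf_comp pol n m f s : expUf pol (n + m) f s = expUf pol n (expUf pol m f) s.
Proof.
elim: n s => //= n IH s; apply: eq_bigr => a _; congr (_ * (_ * _)).
by apply: eq_bigr => s' _; rewrite IH.
Qed.

Definition term n s := forall (ss : nat -> S) (aa : nat -> A), ss 0%N = s ->
  (forall t : nat, (t < n)%N -> 0 < p (ss t) (aa t) (ss t.+1)) -> ss n \in Sterm.

Lemma term_step n s a s' : term n.+1 s -> 0 < p s a s' -> term n s'.
Proof.
move=> H ps ss aa e Hp.
pose ss2 t := if t is t'.+1 then ss t' else s.
pose aa2 t := if t is t'.+1 then aa t' else a.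
apply: (H ss2 aa2 erefl) => -[|t] /= lt; first by rewrite e.
exact: Hp.
Qed.

Lemma term_agree (a0 : A) pol n f g s : term n s -> {in Sterm, f =1 g} ->
  expUf pol n f s = expUf pol n g s.
Proof.
elim: n s => [|n IH] s /= tn fg.
  by apply: fg; apply: (tn (fun _ => s) (fun _ => a0)).
apply: eq_bigr => a _; congr (_ * (_ * _)); apply: eq_bigr => s' _.
have [->|ps] := eqVneq (p s a s') 0; first by rewrite !mul0r.
congr (_ * _); apply: IH => //; apply: (@term_step n s a s' tn).
by rewrite lt0r ps p0.
Qed.

Lemma term_absorb s a s' : s \in Sterm -> 0 < p s a s' -> s' \in Sterm.
Proof.
move=> sT ps; apply/negPn/negP => s'n.
have := p1 s a; rewrite (bigID (fun x => x \in Sterm)) /= pterm // => /eqP.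
rewrite -subr_eq0 addrAC subrr add0r => /eqP/psumr_eq0P H.
by move: ps; rewrite H ?ltxx // => x _; apply: p0.
Qed.

Lemma one_on_term pol k f s : (forall s, \sum_a pol s a = 1) ->
  {in Sterm, forall x, f x = 1} -> s \in Sterm -> expUf pol k f s = 1.
Proof.
move=> pol1 f1; elim: k s => [|k IH] s sT /=; first exact: f1.
rewrite -(pol1 s); apply: eq_bigr => a _.
rewrite rterm // mulr0 expR0 mul1r -[RHS]mulr1 -(p1 s a); congr (_ * _).
apply: eq_bigr => s' _.
have [->|ps] := eqVneq (p s a s') 0; first by rewrite !mul0r.
by rewrite IH ?mulr1 //; apply: (@term_absorb s a s' sT); rewrite lt0r ps p0.
Qed.

Lemma expUf_mono pol k f g s : (forall s a, 0 <= pol s a) -> (forall s, f s <= g s) ->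
  expUf pol k f s <= expUf pol k g s.
Proof.
move=> pol0 fg; elim: k s => [|k IH] s /=; first exact: fg.
apply: ler_sum => a _; apply: ler_wpM2l => //; apply: ler_wpM2l; first exact: expR_ge0.
by apply: ler_sum => s' _; apply: ler_wpM2l.
Qed.

Lemma conv_pos (I : finType) (w x : I -> R) : (forall i, 0 <= w i) -> \sum_i w i = 1 ->
  (forall i, 0 < x i) -> 0 < \sum_i w i * x i.
Proof.
move=> w0 w1 x0; rewrite lt_def sumr_ge0 ?andbT; last first.
  by move=> i _; rewrite mulr_ge0 // ltW.
apply/negP => /eqP/psumr_eq0P H.
have : \sum_i w i = 0.
  apply: big1 => i _; have /eqP := H (fun j _ => mulr_ge0 (w0 j) (ltW (x0 j))) i isT.
  by rewrite mulf_eq0 (gt_eqF (x0 i)) orbF => /eqP.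
by rewrite w1 => /eqP; rewrite oner_eq0.
Qed.

Lemma expUf_pos pol k f s : (forall s a, 0 <= pol s a) -> (forall s, \sum_a pol s a = 1) ->
  (forall s, 0 < f s) -> 0 < expUf pol k f s.
Proof.
move=> pol0 pol1 f0; elim: k s => [|k IH] s /=; first exact: f0.
apply: conv_pos => // a; apply: mulr_gt0; first exact: expR_gt0.
exact: conv_pos.
Qed.

Lemma improve_ge pol k W s : (forall s a, 0 <= pol s a) ->
  (forall s, W s <= expUf pol 1 W s) -> W s <= expUf pol k W s.
Proof.
move=> pol0 H; elim: k s => [|k IH] s //.
rewrite -addn1 expUf_comp; apply: le_trans (IH s) _; exact: expUf_mono.
Qed.

Lemma improve_le pol k W s : (forall s a, 0 <= pol s a) ->
  (forall s, expUf pol 1 W s <= W s) -> expUf pol k W s <= W s.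
Proof.
move=> pol0 H; elim: k s => [|k IH] s //.
rewrite -addn1 expUf_comp; apply: le_trans _ (IH s); exact: expUf_mono.
Qed.

End MDP.
Arguments term_step {R S A p Sterm n s a s'}.
Arguments term_agree {R S A beta p r Sterm}.
Arguments one_on_term {R S A beta p r Sterm}.
Arguments expUf_mono {R S A beta p r}.
Arguments expUf_pos {R S A beta p r}.
Arguments improve_le {R S A beta p r}.
Arguments improve_ge {R S A beta p r}.
Arguments expUf_comp {R S A beta p r}.
Arguments expU_f {R S A beta p r}.
Lemma near_extract (R : realType) (P : R -> Prop) : (\forall t \near 0^', P t) -> exists e : R, 0 < e /\ forall t, 0 < t -> t < e -> P t.
Proof.
move=> /nbhs_ballP [e /= e0 H]; exists e; split => // t t0 te.
apply: H; last by rewrite gt_eqF.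
by rewrite /ball /= sub0r normrN gtr0_norm.
Qed.

Theorem theorem3p4 (R : realType) (S A : finType) (p : S -> A -> S -> R)
  (r : S -> A -> R) (Sterm : {set S}) (T : nat) (d : S -> nat)
  (pi : forall s : S, 'rV[R]_(d s) -> A -> R) (rho : S -> R) (beta : R)
  (theta : forall s : S, 'rV[R]_(d s)) :
  (forall s a s', 0 <= p s a s') ->
  (forall s a, \sum_(s' : S) p s a s' = 1) ->
  (forall s a, s \in Sterm -> r s a = 0) ->
  (forall s a, s \in Sterm -> \sum_(s' in Sterm) p s a s' = 1) ->
  (forall (ss : nat -> S) (aa : nat -> A),
      (forall t : nat, (t < T)%N -> 0 < p (ss t) (aa t) (ss t.+1)) ->
      ss T \in Sterm) ->
  (forall s x a, 0 <= pi s x a) ->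
  (forall s x, \sum_(a : A) pi s x a = 1) ->
  (forall s a, C1 (fun x => pi s x a)) ->
  (forall s, 0 <= rho s) ->
  beta != 0 ->
  exists eps : R, 0 < eps /\
    forall alpha : R, 0 < alpha -> alpha < eps ->
      forall s : S,
        Vsoft beta p r T (policy_of pi theta) s <=
        Vsoft beta p r T (policy_of pi (pg_update pi beta p r T rho theta alpha)) s.
Proof.
move=> p0 p1 rterm pterm Hterm pi0 pi1 piC rho0 b0.
case: (pickP A) => [a0 _|HA]; last first.
  exists 1; split => // alpha _ _ s; exfalso.
  by have := pi1 s (theta s); rewrite big_pred0 // => /esym/eqP; rewrite oner_eq0.
case: T Hterm => [|n] Hterm.
  by exists 1; split => // alpha _ _ s; rewrite /Vsoft /=.
set pol := policy_of pi theta.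
have pol0 s a : 0 <= pol s a by apply: pi0.
have pol1 s : \sum_a pol s a = 1 by apply: pi1.
set c := fun s a => expR (beta * Qsoft beta p r n.+1 pol s a).
set W := fun s => expUf beta p r pol n.+1 (fun _ => 1) s.
have tm s : term p Sterm n.+1 s.
  move=> ss aa _; exact: Hterm.
have W1 : {in Sterm, forall x, W x = 1}.
  by move=> x xT; exact: (one_on_term p0 p1 rterm pterm _ _ _ _ pol1 (fun _ _ => erefl) xT).
have c0 s a : c s a = expR (beta * r s a) *
    \sum_s' p s a s' * expUf beta p r pol n (fun _ => 1) s'.
  rewrite /c /Qsoft /= mulVKf // lnK; last first.
    rewrite posrE; apply: mulr_gt0; first exact: expR_gt0.
    apply: conv_pos => // s'; rewrite expU_f; exact: (expUf_pos p0 p1).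
  by congr (_ * _); apply: eq_bigr => s' _; rewrite expU_f.
have cE s a : c s a = expR (beta * r s a) * \sum_s' p s a s' * W s'.
  rewrite c0; congr (_ * _); apply: eq_bigr => s' _.
  have [->|ps] := eqVneq (p s a s') 0; first by rewrite !mul0r.
  congr (_ * _); rewrite /W -addn1 expUf_comp.
  apply: (term_agree p0 a0); first by apply: (term_step (a:=a) (tm s)); rewrite lt0r ps p0.
  by move=> x xT; rewrite (one_on_term p0 p1 rterm pterm) // => y.
have WE s : W s = \sum_a pol s a * c s a.
  by rewrite /W /=; apply: eq_bigr => a _; rewrite c0.
have near_s s : \forall t \near 0^', 0 < t ->
    0 <= beta * (\sum_a c s a * pi s (theta s + t *: soft_pg_block pi beta p r n.+1 rho theta s) a
                 - \sum_a c s a * pi s (theta s) a).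
  exact: (@analytic R A (d s) (fun a x => pi s x a) (c s) (theta s) beta (rho s) b0 (rho0 s)
           (fun a => (piC s a).1 (theta s))).
have [eps [eps0 Heps]] := near_extract _ _ (@filter_forall _ S _ _ _ near_s).
exists eps; split => // alpha a0p aeps s.
have Hs := Heps alpha a0p aeps.
set pol' := policy_of pi (pg_update pi beta p r n.+1 rho theta alpha).
have pol0' s' a : 0 <= pol' s' a by apply: pi0.
have pol1' s' : \sum_a pol' s' a = 1 by apply: pi1.
have TW s' : expUf beta p r pol' 1 W s' = \sum_a pol' s' a * c s' a.
  by rewrite /=; apply: eq_bigr => a _; rewrite cE.
have key s' : 0 <= beta * (expUf beta p r pol' 1 W s' - W s').
  rewrite TW WE; have := Hs s' a0p.
  rewrite /pol' /pol /policy_of /pg_update.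
  by under eq_bigr do rewrite mulrC; under [X in _ - X]eq_bigr do rewrite mulrC.
have Wpos : 0 < W s by apply: (expUf_pos p0 p1).
have U'E : expU beta p r pol' n.+1 s = expUf beta p r pol' n.+1 W s.
  by rewrite expU_f; apply: (term_agree p0 a0) => // x xT; rewrite W1.
have U'pos : 0 < expU beta p r pol' n.+1 s by rewrite expU_f; apply: (expUf_pos p0 p1).
rewrite /Vsoft -/pol -/pol' U'E.
have -> : expU beta p r pol n.+1 s = W s by rewrite expU_f.
rewrite U'E in U'pos.
have [bneg|bpos] := ltP beta 0.
  have H : expUf beta p r pol' n.+1 W s <= W s.
    apply: (improve_le p0) => // s'; have := key s'.
    by rewrite nmulr_rge0 // subr_le0.
  apply: ler_wnM2l; first by rewrite invr_le0 ltW.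
  by rewrite ler_ln ?posrE.
have H : W s <= expUf beta p r pol' n.+1 W s.
  apply: (improve_ge p0) => // s'; have := key s'.
  by rewrite pmulr_rge0 ?subr_ge0 // lt0r b0 bpos.
apply: ler_wpM2l; first by rewrite invr_ge0.
by rewrite ler_ln ?posrE.
Qed.
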